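(* Let $(X,d)$ be a metric space and let $U\subseteq F_{USCB}(X)$. Then the following statements are equivalent: (i) $U$ is compact in $(F_{USCB}(X),H_{\rm send})$; (ii) $U$ is closed in $(F_{USCB}(X),H_{\rm send})$, $U(0)=\bigcup_{u\in U}[u]_0$ is relatively compact in $X$, and $U$ is equi-right-continuous at $0$; (iii) $U$ is closed in $(F_{USCB}(X),H_{\rm send})$, $U(0)$ is compact in $X$, and $U$ is equi-right-continuous at $0$.
   Context: A fuzzy set on $X$ is a function $u:X\to[0,1]$, with $\alpha$-cuts $[u]_\alpha=\{x: u(x)\ge\alpha\}$ for $\alpha\in(0,1]$ and $[u]_0=\overline{\{u>0\}}$. $F_{USC}(X)$ is the set of fuzzy sets with all $\alpha$-cuts ($\alpha\in[0,1]$) non-empty and closed; $F_{USCB}(X)=\{u\in F_{USC}(X): [u]_0\text{ is compact}\}$. The Hausdorff distance on non-empty closed subsets of a metric space $(Y,\rho)$ is $H(A,B)=\max\{\sup_{a\in A}\inf_{b\in B}\rho(a,b),\sup_{b\in B}\inf_{a\in A}\rho(a,b)\}$. $X\times[0,1]$ is metrized by $\overline{d}((x,\alpha),(y,\beta))=d(x,y)+|\alpha-\beta|$; ${\rm send}\,u=\{(x,t)\in X\times[0,1]: u(x)\ge t\}\cap([u]_0\times[0,1])$; $H_{\rm send}(u,v)=H({\rm send}\,u,{\rm send}\,v)$ (with $\rho=\overline{d}$). $U\subseteq F_{USC}(X)$ is equi-right-continuous at $0$ if for each $\varepsilon>0$ there is $\delta>0$ such that $H([u]_\delta,[u]_0)<\varepsilon$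 (with $\rho=d$) for all $u\in U$. *)

(* Defs.v *)
From mathcomp Require Import all_boot all_order all_algebra.
From mathcomp Require Import all_classical all_reals.
From mathcomp Require Import ereal.
Set Implicit Arguments. Unset Strict Implicit. Unset Printing Implicit Defensive.
Import Order.TTheory GRing.Theory Num.Theory.
Local Open Scope classical_set_scope.
Local Open Scope ring_scope.

Section Defs.
Variable R : realType.

Definition m_open {T : Type} (S : set T) (rho : T -> T -> \bar R) (G : set T) :=
  forall x, S x -> G x -> exists e : R, 0 < e /\
    forall y, S y -> (rho x y < e%:E)%E -> G y.

Definition m_closure {T : Type} (S : set T) (rho : T -> T -> \bar R) (A : set T) :=
  [set x | S x /\ forall e : R, 0 < e -> exists y, A y /\ (rho x y < e%:E)%E].

Definition m_closed {T : Type} (S : set T) (rho : T -> T -> \bar R) (K : set T) :=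
  m_closure S rho K `<=` K.

Definition m_compact {T : Type} (S : set T) (rho : T -> T -> \bar R) (K : set T) :=
  K `<=` S /\
  forall (I : Type) (G : I -> set T), (forall i, m_open S rho (G i)) ->
    K `<=` \bigcup_i G i ->
    exists (n : nat) (f : nat -> I), K `<=` [set x | exists k, (k < n)%N /\ G (f k) x].

Definition m_rel_compact {T : Type} (S : set T) (rho : T -> T -> \bar R) (K : set T) :=
  m_compact S rho (m_closure S rho K).

Definition hausdorff {T : Type} (rho : T -> T -> R) (A B : set T) : \bar R :=
  Order.max
    (ereal_sup [set ereal_inf [set (rho a b)%:E | b in B] | a in A])
    (ereal_sup [set ereal_inf [set (rho a b)%:E | a in A] | b in B]).

Variable X : Type.
Variable d : X -> X -> R.

Definition dE : X -> X -> \bar R := fun x y => (d x y)%:E.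

Definition cut0 (u : X -> R) : set X := m_closure setT dE [set x | 0 < u x].

Definition cut (u : X -> R) (a : R) : set X :=
  if 0 < a then [set x | a <= u x] else cut0 u.

Definition F_USC (u : X -> R) : Prop :=
  (forall x, 0 <= u x <= 1) /\
  forall a : R, 0 <= a <= 1 -> cut u a !=set0 /\ m_closed setT dE (cut u a).

Definition F_USCB (u : X -> R) : Prop := F_USC u /\ m_compact setT dE (cut0 u).

Definition dbar (p q : X * R) : R := d p.1 q.1 + `|p.2 - q.2|.

Definition send (u : X -> R) : set (X * R) :=
  [set p | 0 <= p.2 <= 1 /\ p.2 <= u p.1 /\ cut0 u p.1].

Definition H_send (u v : X -> R) : \bar R := hausdorff dbar (send u) (send v).

Definition U0 (U : set (X -> R)) : set X := \bigcup_(u in U) cut0 u.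

Definition equi_right_cont0 (U : set (X -> R)) : Prop :=
  forall e : R, 0 < e -> exists delta : R, 0 < delta /\
    forall u, U u -> (hausdorff d (cut u delta) (cut0 u) < e%:E)%E.

End Defs.

(* Main.v *)
Require Import Defs.
From mathcomp Require Import all_boot all_order all_algebra.
From mathcomp Require Import all_classical all_reals.
From mathcomp Require Import ereal.
From mathcomp Require Import lra.
Import Order.TTheory GRing.Theory Num.Theory.
Local Open Scope classical_set_scope.
Local Open Scope ring_scope.
Set Implicit Arguments. Unset Strict Implicit. Unset Printing Implicit Defensive.

Section RealAux.
Variable R : realType.

Lemma lte_dense (x : \bar R) (e : R) : (x < e%:E)%E ->
  exists e', e' < e /\ (x < e'%:E)%E.
Proof.
case: x => [r| |] //=.
- rewrite lte_fin => he; exists ((r + e) / 2); split.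
    by rewrite ltr_pdivrMr // mulrDr mulr1 ltrD2r.
  by rewrite lte_fin ltr_pdivlMr // mulrDr mulr1 ltrD2l.
- move=> _; exists (e - 1); split; last exact: ltNyr.
  by rewrite ltrBlDr ltrDl.
Qed.

Lemma inv_small (e : R) : 0 < e -> exists k : nat, (k.+1%:R)^-1 < e.
Proof.
move=> e0; exists (Num.truncn e^-1).
rewrite -[e in _ < e]invrK ltf_pV2 ?posrE ?invr_gt0 //.
exact: truncnS_gt.
Qed.

Lemma inv_le (n m : nat) : (n <= m)%N -> (m.+1%:R)^-1 <= (n.+1%:R)^-1 :> R.
Proof. by move=> nm; rewrite lef_pV2 ?posrE // ler_nat. Qed.

Lemma inv_pos (n : nat) : 0 < (n.+1%:R)^-1 :> R.
Proof. by rewrite invr_gt0. Qed.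

Lemma lt_le_E (x : \bar R) (a b : R) : (x < a%:E)%E -> a <= b -> (x < b%:E)%E.
Proof. by move=> h ab; apply: (lt_le_trans h); rewrite lee_fin. Qed.

End RealAux.

Lemma bound_fin (g : nat -> nat) (n : nat) :
  exists M, forall k, (k < n)%N -> (g k <= M)%N.
Proof.
elim: n => [|n [M HM]]; first by exists 0%N.
exists (maxn M (g n)) => k; rewrite ltnS leq_eqVlt => /orP[/eqP->|kn].
  by rewrite leq_maxr.
by apply: leq_trans (HM _ kn) (leq_maxl _ _).
Qed.

Definition incr (phi : nat -> nat) := forall n, (phi n < phi n.+1)%N.

Lemma incr_lt phi : incr phi -> forall n m, (n < m)%N -> (phi n < phi m)%N.
Proof.
move=> hp n; elim=> [//|m IH]; rewrite ltnS leq_eqVlt => /orP[/eqP->//|nm].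
exact: ltn_trans (IH nm) (hp m).
Qed.

Lemma incr_ge phi : incr phi -> forall n, (n <= phi n)%N.
Proof.
move=> hp; elim=> [//|n IH]; exact: leq_ltn_trans IH (hp n).
Qed.

Lemma incr_comp phi psi : incr phi -> incr psi -> incr (phi \o psi).
Proof. by move=> hp hq n /=; apply: incr_lt. Qed.

Fixpoint rec_seq (f : nat * nat -> nat) (n : nat) : nat :=
  match n with 0 => f (0%N, 0%N) | m.+1 => f ((rec_seq f m).+1, m.+1) end.

Section Gen.
Variables (R : realType) (T : Type).

Definition conv (rho : T -> T -> \bar R) x (s : nat -> T) :=
  forall e : R, 0 < e -> exists N, forall n, (N <= n)%N -> (rho x (s n) < e%:E)%E.

Definition seqc (rho : T -> T -> \bar R) (K : set T) :=
  forall s : nat -> T, (forall n, K (s n)) ->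
    exists x phi, [/\ K x, incr phi & conv rho x (s \o phi)].

Lemma cluster_subseq (rho : T -> T -> \bar R) x (s : nat -> T) :
  (forall e : R, 0 < e -> forall N, exists n, (N <= n)%N /\ (rho x (s n) < e%:E)%E) ->
  exists phi, incr phi /\ conv rho x (s \o phi).
Proof.
move=> hc.
have hc' : forall p : nat * nat, exists n, (p.1 <= n)%N /\
    (rho x (s n) < ((p.2.+1%:R)^-1)%:E)%E.
  by move=> -[N k]; apply: hc; exact: inv_pos.
case: (choice hc') => f hf.
exists (rec_seq f); split.
  by move=> n /=; case: (hf ((rec_seq f n).+1, n.+1)).
move=> e e0; have [k hk] := inv_small e0; exists k => n kn /=.
have h : (rho x (s (rec_seq f n)) < ((n.+1%:R)^-1)%:E)%E.
  by case: n {kn} => [|n] /=; [case: (hf (0%N, 0%N))|case: (hf ((rec_seq f n).+1, n.+1))].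
apply: (lt_le_E h); apply: le_trans (ltW hk); exact: inv_le.
Qed.

Variables (S : set T) (rho : T -> T -> \bar R).
Hypothesis rrefl : forall x, S x -> forall e : R, 0 < e -> (rho x x < e%:E)%E.
Hypothesis rsym : forall x y (e : R), S x -> S y -> (rho x y < e%:E)%E -> (rho y x < e%:E)%E.
Hypothesis rtri : forall x y z (a b : R), S x -> S y -> S z ->
  (rho x y < a%:E)%E -> (rho y z < b%:E)%E -> (rho x z < (a + b)%:E)%E.

Lemma ball_open x (r : R) : S x -> m_open S rho [set z | (rho x z < r%:E)%E].
Proof.
move=> Sx z Sz /= /lte_dense [r' [rr' hr']]; exists (r - r'); split.
  by rewrite subr_gt0.
move=> w Sw hw; have := rtri Sx Sz Sw hr' hw.
by rewrite addrC subrK.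
Qed.

Lemma seq_of_cover K : m_compact S rho K -> seqc rho K.
Proof.
move=> [KS hK] s Ks.
suff [x [Kx hx]] : exists x, K x /\ forall e : R, 0 < e -> forall N,
    exists n, (N <= n)%N /\ (rho x (s n) < e%:E)%E.
  by have [phi [hp hc]] := cluster_subseq hx; exists x, phi; split.
apply: contrapT => hn.
pose G (i : T * R * nat) := [set z | [/\ K i.1.1, 0 < i.1.2,
  (forall n, (i.2 <= n)%N -> ~ (rho i.1.1 (s n) < i.1.2%:E)%E) &
  (rho i.1.1 z < i.1.2%:E)%E]].
have Gop i : m_open S rho (G i).
  move=> z Sz [Kx e0 hN hz].
  have [e [e0' he]] := @ball_open i.1.1 i.1.2 (KS _ Kx) z Sz hz.
  by exists e; split => // w Sw hw; split => //; apply: he.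
have cov : K `<=` \bigcup_i G i.
  move=> y Ky; apply: contrapT => hy; apply: hn; exists y; split => // e e0 N.
  apply: contrapT => hne; apply: hy; exists (y, e, N) => //; split => //=.
    by move=> n Nn hr; apply: hne; exists n.
  exact: rrefl (KS _ Ky) _ e0.
have [m [f hf]] := hK _ G Gop cov.
have [M HM] := bound_fin (fun k => (f k).2) m.
have [k [km [_ _ hN hz]]] := hf _ (Ks M).
exact: hN _ (HM _ km) hz.
Qed.

Lemma cover_of_seq K : K `<=` S -> K !=set0 -> seqc rho K -> m_compact S rho K.
Proof.
move=> KS [x0 Kx0] hK; split => // I G Gop cov.
(* Lebesgue number *)
have [e [e0 hL]] : exists e : R, 0 < e /\ forall x, K x -> exists i,
    forall z, S z -> (rho x z < e%:E)%E -> G i z.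
  apply: contrapT => hn.
  have hx : forall k : nat, exists x, K x /\ forall i, ~ (forall z, S z ->
      (rho x z < ((k.+1%:R)^-1)%:E)%E -> G i z).
    move=> k; apply: contrapT => hk; apply: hn; exists (k.+1%:R)^-1; split.
      exact: inv_pos.
    move=> x Kx; apply: contrapT => hi; apply: hk; exists x; split => // i hG.
    by apply: hi; exists i.
  have [xs hxs] := choice hx.
  have [y [phi [Ky hphi hc]]] := hK xs (fun n => (hxs n).1).
  have [i _ Gy] := cov _ Ky.
  have [r [r0 hr]] := Gop i y (KS _ Ky) Gy.
  have r20 : 0 < r / 2 by rewrite divr_gt0.
  have [k0 hk0] := inv_small r20.
  have [N hN] := hc _ r20.
  pose n := maxn N k0.
  apply: ((hxs (phi n)).2 i) => z Sz hz.
  apply: hr => //; rewrite [r]splitr.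
  apply: (rtri (KS _ Ky) (KS _ (hxs (phi n)).1) Sz).
    exact: hN (leq_maxl _ _).
  apply: (lt_le_E hz); apply: le_trans (ltW hk0).
  apply: inv_le; apply: leq_trans (leq_maxr N k0) (incr_ge hphi n).
(* totally bounded *)
have [m [c [Kc hc]]] : exists (m : nat) (c : nat -> T),
    (forall k, (k < m)%N -> K (c k)) /\
    forall x, K x -> exists k, (k < m)%N /\ (rho (c k) x < e%:E)%E.
  apply: contrapT => hn.
  have H : forall p : nat * (nat -> T), exists x,
      (forall k, (k < p.1)%N -> K (p.2 k)) ->
      K x /\ forall k, (k < p.1)%N -> ~ (rho (p.2 k) x < e%:E)%E.
    move=> [m c] /=.
    case: (pselect (forall k, (k < m)%N -> K (c k))) => hc; last first.
      by exists x0 => /hc.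
    suff [x hx] : exists x, K x /\ forall k, (k < m)%N -> ~ (rho (c k) x < e%:E)%E.
      by exists x.
    apply: contrapT => hx; apply: hn; exists m, c; split => // x Kx.
    apply: contrapT => hk; apply: hx; exists x; split => // k km hr.
    by apply: hk; exists k.
  case: (choice H) => nxt hnxt.
  pose fix Fs n := match n with 0 => fun _ => x0
    | m.+1 => fun k => if k == m then nxt (m, Fs m) else Fs m k end.
  pose xs n := nxt (n, Fs n).
  have hFs : forall m k, (k < m)%N -> Fs m k = xs k.
    elim=> [//|m IH] k; rewrite ltnS leq_eqVlt => /orP[/eqP->|km] /=.
      by rewrite eqxx.
    by rewrite (ltn_eqF km) IH.
  have hall : forall n, (forall k, (k < n)%N -> K (xs k)).
    elim=> [//|n IH] k; rewrite ltnS leq_eqVlt => /orP[/eqP->|km]; last exact: IH.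
    have := (hnxt (n, Fs n)) => /=; case.
      by move=> j jn; rewrite hFs //; apply: IH.
    by [].
  have hsep : forall n k, (k < n)%N -> ~ (rho (xs k) (xs n) < e%:E)%E.
    move=> n k kn; have := (hnxt (n, Fs n)) => /=; case.
      by move=> j jn; rewrite hFs //; apply: hall jn.
    by move=> _ /(_ k kn); rewrite hFs.
  have [y [phi [Ky hphi hcv]]] := hK xs (fun n => hall n.+1 n (ltnSn n)).
  have e20 : 0 < e / 2 by rewrite divr_gt0.
  have [N hN] := hcv _ e20.
  have Sa : S (xs (phi N)) by apply: KS; apply: (hall (phi N).+1).
  have Sb : S (xs (phi N.+1)) by apply: KS; apply: (hall (phi N.+1).+1).
  apply: (hsep _ _ (hphi N)).
  rewrite [e]splitr; apply: (rtri Sa (KS _ Ky) Sb).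
    by apply: rsym (KS _ Ky) Sa _; apply: hN.
  by apply: hN.
have [i0 _ _] := cov _ Kx0.
have hg : forall k, exists i, (k < m)%N -> forall z, S z -> (rho (c k) z < e%:E)%E -> G i z.
  move=> k; case: (ltnP k m) => km; last by exists i0.
  by have [i hi] := hL _ (Kc _ km); exists i.
case: (choice hg) => g hg'.
exists m, g => x Kx; have [k [km hk]] := hc _ Kx.
by exists k; split => //; apply: hg' => //; apply: KS.
Qed.

Lemma compact_iff K : m_compact S rho K <-> [/\ K `<=` S, K !=set0 & seqc rho K].
Proof.
split; last by case=> *; apply: cover_of_seq.
move=> hK; split; [by case: hK| |exact: seq_of_cover].
apply: contrapT => hn; case: hK => _ /(_ False (fun _ => set0)) H.
have cov : K `<=` \bigcup_(i : False) set0 by move=> x Kx; case: hn; exists x.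
by have [n [f _]] := H (fun i => match i with end) cov; case: (f 0%N).
Qed.

Lemma seqc_closed K : (forall x y, S x -> S y -> (forall e : R, 0 < e -> (rho x y < e%:E)%E) -> x = y) ->
  K `<=` S -> seqc rho K -> m_closed S rho K.
Proof.
move=> hsep KS hK x [Sx hx].
have hy : forall k : nat, exists y, K y /\ (rho x y < ((k.+1%:R)^-1)%:E)%E.
  by move=> k; apply: hx; exact: inv_pos.
case: (choice hy) => ys hys.
have [z [phi [Kz hphi hc]]] := hK ys (fun n => (hys n).1).
suff -> : x = z by [].
apply: (hsep _ _ Sx (KS _ Kz)) => e e0.
have e20 : 0 < e / 2 by rewrite divr_gt0.
have [k hk] := inv_small e20.
have [N hN] := hc _ e20.
pose n := maxn N k.
have Sy : S (ys (phi n)) by apply: KS; apply: (hys _).1.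
rewrite [e]splitr; apply: (rtri Sx Sy (KS _ Kz)).
  apply: (lt_le_E (hys _).2); apply: le_trans (ltW hk); apply: inv_le.
  exact: leq_trans (leq_maxr N k) (incr_ge hphi n).
by apply: rsym (KS _ Kz) Sy _; apply: hN; exact: leq_maxl.
Qed.

Lemma seqc_sub K A : K `<=` S -> m_closed S rho A -> A `<=` K -> seqc rho K -> seqc rho A.
Proof.
move=> KS hA AK hK s As.
have [z [phi [Kz hphi hc]]] := hK s (fun n => AK _ (As n)).
exists z, phi; split => //; apply: hA; split; first exact: KS.
move=> e e0; have [N hN] := hc _ e0.
by exists (s (phi N)); split => //; apply: hN.
Qed.

End Gen.

Definition infn (J : nat -> Prop) := forall N, exists n, (N <= n)%N /\ J n.

Lemma pigeon (F : finType) (f : nat -> F) (J : nat -> Prop) : infn J ->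
  exists c, infn (fun n => J n /\ f n = c).
Proof.
move=> hJ; apply: contrapT => hn.
have h : forall c, exists N, forall n, (N <= n)%N -> ~ (J n /\ f n = c).
  move=> c; apply: contrapT => hc; apply: hn; exists c => N.
  apply: contrapT => hN; apply: hc; exists N => n Nn hnc; apply: hN; by exists n.
case: (choice h) => Nf hNf.
have [n [Mn Jn]] := hJ (\max_(c : F) Nf c)%N.
apply: (hNf (f n) n _ (conj Jn erefl)).
exact: leq_trans (leq_bigmax (f n)) Mn.
Qed.

Lemma diag (close : nat -> nat -> nat -> Prop) :
  (forall k J, infn J -> exists J', [/\ infn J', (forall n, J' n -> J n) &
     forall a b, J' a -> J' b -> close k a b]) ->
  exists psi, incr psi /\ forall k a b, (k <= a)%N -> (k <= b)%N -> close k (psi a) (psi b).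
Proof.
move=> H.
have h1 : forall p : nat * (nat -> Prop), exists J', infn p.2 ->
    [/\ infn J', (forall n, J' n -> p.2 n) & forall a b, J' a -> J' b -> close p.1 a b].
  move=> [k J] /=; case: (pselect (infn J)) => hJ.
    by have [J' hJ'] := H k J hJ; exists J'.
  by exists J.
case: (choice h1) => rf hrf.
pose fix Js k := match k with 0 => rf (0%N, fun _ => True) | k'.+1 => rf (k'.+1, Js k') end.
have Jinf : forall k, [/\ infn (Js k), (forall n, Js k.+1 n -> Js k n) &
    forall a b, Js k a -> Js k b -> close k a b].
  have i0 : infn (Js 0).
    by have [] := hrf (0%N, fun _ => True) (fun N => ex_intro _ N (conj (leqnn N) I)).
  have step : forall k, infn (Js k) -> infn (Js k.+1) /\ (forall n, Js k.+1 n -> Js k n).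
    by move=> k hk; have [] := hrf (k.+1, Js k) hk.
  have iall : forall k, infn (Js k).
    by elim=> [//|k IH]; case: (step k IH).
  move=> k; split => //; first by case: (step k (iall k)).
  case: k => [|k]; first by have [] := hrf (0%N, fun _ => True) (fun N => ex_intro _ N (conj (leqnn N) I)).
  by have [] := hrf (k.+1, Js k) (iall k).
have Jsub : forall k k', (k <= k')%N -> forall n, Js k' n -> Js k n.
  move=> k; elim=> [|k' IH]; first by rewrite leqn0 => /eqP ->.
  rewrite leq_eqVlt => /orP[/eqP -> //|kk'] n hn.
  by apply: IH => //; case: (Jinf k') => _ /(_ n hn).
have h2 : forall p : (nat -> Prop) * nat, exists n, infn p.1 -> (p.2 <= n)%N /\ p.1 n.
  move=> [J N] /=; case: (pselect (infn J)) => hJ; last by exists 0%N.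
  by have [n hn] := hJ N; exists n.
case: (choice h2) => pick hpick.
pose fix psi k := match k with 0 => pick (Js 0, 0%N) | k'.+1 => pick (Js k'.+1, (psi k').+1) end.
have hmem : forall k, Js k (psi k).
  case=> [|k]; first by case: (hpick (Js 0, 0%N)) => //; case: (Jinf 0).
  by case: (hpick (Js k.+1, (psi k).+1)) => //; case: (Jinf k.+1).
exists psi; split.
  by move=> k /=; case: (hpick (Js k.+1, (psi k).+1)) => //; case: (Jinf k.+1).
move=> k a b ka kb; case: (Jinf k) => _ _; apply.
  exact: Jsub ka _ (hmem a).
exact: Jsub kb _ (hmem b).
Qed.

Section Haus.
Variables (R : realType) (T : Type) (rho : T -> T -> R).

Lemma haus_lt (A B : set T) (e : R) : (hausdorff rho A B < e%:E)%E ->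
  exists e', e' < e /\ (forall a, A a -> exists b, B b /\ rho a b < e') /\
                       (forall b, B b -> exists a, A a /\ rho a b < e').
Proof.
move=> /lte_dense [e' [ee' h]]; exists e'; split => //.
move: h; rewrite /hausdorff gt_max => /andP[h1 h2]; split.
- move=> a Aa.
  have : (ereal_inf [set (rho a b)%:E | b in B] < e'%:E)%E.
    apply: le_lt_trans h1; apply: ereal_sup_ubound; by exists a.
  by move=> /ereal_inf_lt [_ [b Bb <-]]; rewrite lte_fin => hb; exists b.
- move=> b Bb.
  have : (ereal_inf [set (rho a b)%:E | a in A] < e'%:E)%E.
    apply: le_lt_trans h2; apply: ereal_sup_ubound; by exists b.
  by move=> /ereal_inf_lt [_ [a Aa <-]]; rewrite lte_fin => ha; exists a.
Qed.

Lemma haus_le (A B : set T) (e : R) :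
  (forall a, A a -> exists b, B b /\ rho a b <= e) ->
  (forall b, B b -> exists a, A a /\ rho a b <= e) ->
  (hausdorff rho A B <= e%:E)%E.
Proof.
move=> h1 h2; rewrite /hausdorff ge_max; apply/andP; split.
- apply: ge_ereal_sup => _ [a Aa <-]; have [b [Bb hb]] := h1 _ Aa.
  by apply: (@le_trans _ _ (rho a b)%:E); [apply: ereal_inf_lbound; exists b|rewrite lee_fin].
- apply: ge_ereal_sup => _ [b Bb <-]; have [a [Aa ha]] := h2 _ Bb.
  by apply: (@le_trans _ _ (rho a b)%:E); [apply: ereal_inf_lbound; exists a|rewrite lee_fin].
Qed.

Lemma haus_lt_of (A B : set T) (e' e : R) : e' < e ->
  (forall a, A a -> exists b, B b /\ rho a b <= e') ->
  (forall b, B b -> exists a, A a /\ rho a b <= e') ->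
  (hausdorff rho A B < e%:E)%E.
Proof. by move=> ee' h1 h2; apply: le_lt_trans (haus_le h1 h2) _; rewrite lte_fin. Qed.

End Haus.

Section Fuzzy.
Variables (R : realType) (X : Type) (d : X -> X -> R).
Hypothesis d_ge0 : forall x y, 0 <= d x y.
Hypothesis d_eq0 : forall x y, d x y = 0 <-> x = y.
Hypothesis d_sym : forall x y, d x y = d y x.
Hypothesis d_tri : forall x y z, d x z <= d x y + d y z.

Lemma d_xx x : d x x = 0. Proof. by apply/d_eq0. Qed.

Lemma dE_refl x : setT x -> forall e : R, 0 < e -> (dE d x x < e%:E)%E.
Proof. by move=> _ e e0; rewrite /dE d_xx lte_fin. Qed.

Lemma dE_sym x y (e : R) : setT x -> setT y -> (dE d x y < e%:E)%E -> (dE d y x < e%:E)%E.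
Proof. by rewrite /dE d_sym. Qed.

Lemma dE_tri x y z (a b : R) : setT x -> setT y -> setT z ->
  (dE d x y < a%:E)%E -> (dE d y z < b%:E)%E -> (dE d x z < (a + b)%:E)%E.
Proof.
rewrite /dE !lte_fin => _ _ _ h1 h2; apply: le_lt_trans (d_tri x y z) _.
exact: ltrD.
Qed.

Lemma dE_sep x y : setT x -> setT y -> (forall e : R, 0 < e -> (dE d x y < e%:E)%E) -> x = y.
Proof.
move=> _ _ h; apply/d_eq0; apply/eqP; rewrite eq_le d_ge0 andbT.
apply/ler_addgt0Pr => e e0; rewrite add0r; have := h e e0; rewrite /dE lte_fin; exact: ltW.
Qed.

Lemma sub_clos (A : set X) : A `<=` m_closure setT (dE d) A.
Proof. by move=> x Ax; split => // e e0; exists x; split => //; apply: dE_refl. Qed.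

Lemma clos_closed (A : set X) : m_closed setT (dE d) (m_closure setT (dE d) A).
Proof.
move=> x [_ hx]; split => // e e0.
have e20 : 0 < e / 2 by rewrite divr_gt0.
have [y [[_ hy] hxy]] := hx _ e20.
have [z [Az hyz]] := hy _ e20.
exists z; split => //; rewrite [e]splitr; exact: dE_tri hxy hyz.
Qed.

Lemma clos_mono (A B : set X) : A `<=` B -> m_closure setT (dE d) A `<=` m_closure setT (dE d) B.
Proof. move=> AB x [_ hx]; split => // e e0; have [y [Ay h]] := hx _ e0; exists y; split => //; exact: AB. Qed.

Lemma compactX_iff K : m_compact setT (dE d) K <-> K !=set0 /\ seqc (dE d) K.
Proof.
rewrite compact_iff; last first.
- exact: dE_tri. - exact: dE_sym. - exact: dE_refl.
by split => [[]|[]] //.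
Qed.

Lemma cutE (u : X -> R) a : 0 < a -> cut d u a = [set x | a <= u x].
Proof. by move=> a0; rewrite /cut a0. Qed.

Lemma cut0E (u : X -> R) : cut d u 0 = cut0 d u.
Proof. by rewrite /cut ltxx. Qed.

Lemma pos_cut0 (u : X -> R) x : 0 < u x -> cut0 d u x.
Proof. by move=> h; apply: sub_clos. Qed.

Lemma cut0_closed (u : X -> R) : m_closed setT (dE d) (cut0 d u).
Proof. exact: clos_closed. Qed.

Lemma usc_range (u : X -> R) x : F_USC d u -> 0 <= u x <= 1.
Proof. by case=> h _; apply: h. Qed.

Lemma usc_cut_closed (u : X -> R) (a : R) x : F_USC d u -> 0 < a <= 1 ->
  (forall e : R, 0 < e -> exists y, a <= u y /\ d x y < e) -> a <= u x.
Proof.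
move=> [_ hc] /andP[a0 a1] h.
have ha : 0 <= a <= 1 by rewrite (ltW a0) a1.
have [_ hcl] := hc a ha.
have : cut d u a x.
  apply: hcl; split => // e e0; have [y [hy hd]] := h e e0.
  by exists y; split; [rewrite cutE|rewrite /dE lte_fin].
by rewrite cutE.
Qed.

Lemma usc_one (u : X -> R) : F_USC d u -> exists x, 1 <= u x.
Proof.
move=> [_ hc]; have h1 : 0 <= (1 : R) <= 1 by rewrite ler01 lexx.
have [[x hx] _] := hc 1 h1.
by exists x; move: hx; rewrite cutE.
Qed.

Lemma cut0_nonempty (u : X -> R) : F_USC d u -> cut0 d u !=set0.
Proof.
move=> hu; have [x hx] := usc_one hu; exists x; apply: pos_cut0.
exact: lt_le_trans ltr01 hx.
Qed.

Lemma cut_sub0 (u : X -> R) a : 0 < a -> cut d u a `<=` cut0 d u.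
Proof. by move=> a0; rewrite cutE // => x hx; apply: pos_cut0; apply: lt_le_trans hx. Qed.

Lemma dbar_sym p q : dbar d p q = dbar d q p.
Proof. by rewrite /dbar d_sym distrC. Qed.

Lemma dbar_tri p q r : dbar d p r <= dbar d p q + dbar d q r.
Proof.
rewrite /dbar addrACA; apply: lerD => //.
by have := ler_distD q.2 p.2 r.2; rewrite addrC.
Qed.

Lemma dbar_d p q : d p.1 q.1 <= dbar d p q.
Proof. by rewrite /dbar lerDl. Qed.

Lemma dbar_t p q : `|p.2 - q.2| <= dbar d p q.
Proof. by rewrite /dbar lerDr. Qed.

Lemma dbar_xx p : dbar d p p = 0.
Proof. by rewrite /dbar d_xx subrr normr0 addr0. Qed.

Lemma sendP (u : X -> R) x t : send d u (x, t) <-> [/\ 0 <= t <= 1, t <= u x & cut0 d u x].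
Proof. by rewrite /send /=; split => [[? [? ?]]|[? ? ?]]. Qed.

Lemma Hs_refl u : F_USCB d u -> forall e : R, 0 < e -> (H_send d u u < e%:E)%E.
Proof.
move=> _ e e0; apply: (haus_lt_of e0) => a Aa; by exists a; rewrite dbar_xx.
Qed.

Lemma Hs_sym u v (e : R) : F_USCB d u -> F_USCB d v -> (H_send d u v < e%:E)%E -> (H_send d v u < e%:E)%E.
Proof.
move=> _ _ /haus_lt [e' [ee' [h1 h2]]]; apply: (haus_lt_of ee').
- by move=> a /h2 [b [? ?]]; exists b; rewrite dbar_sym; split => //; apply: ltW.
- by move=> b /h1 [a [? ?]]; exists a; rewrite dbar_sym; split => //; apply: ltW.
Qed.

Lemma Hs_tri u v w (a b : R) : F_USCB d u -> F_USCB d v -> F_USCB d w ->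
  (H_send d u v < a%:E)%E -> (H_send d v w < b%:E)%E -> (H_send d u w < (a + b)%:E)%E.
Proof.
move=> _ _ _ /haus_lt [a' [aa' [h1 h2]]] /haus_lt [b' [bb' [k1 k2]]].
apply: (haus_lt_of (ltrD aa' bb')).
- move=> p /h1 [q [Sq hpq]]; have [r [Sr hqr]] := k1 _ Sq.
  by exists r; split => //; apply: le_trans (dbar_tri p q r) _; apply: ltW; apply: ltrD.
- move=> r /k2 [q [Sq hqr]]; have [p [Sp hpq]] := h2 _ Sq.
  by exists p; split => //; apply: le_trans (dbar_tri p q r) _; apply: ltW; apply: ltrD.
Qed.

Lemma Hs_cut0 u v (e : R) : F_USC d u -> (H_send d u v < e%:E)%E ->
  forall x, cut0 d u x -> exists y, cut0 d v y /\ d x y < e.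
Proof.
move=> hu /haus_lt [e' [ee' [h1 _]]] x hx.
have sp : send d u (x, 0).
  by apply/sendP; split => //; [rewrite lexx ler01|case/andP: (usc_range x hu)].
have [[y t] [/sendP [_ _ hy] h]] := h1 _ sp.
exists y; split => //; apply: le_lt_trans (dbar_d _ _) (lt_trans h ee').
Qed.

Lemma Hs_le u v x : F_USC d u -> F_USC d v ->
  (forall e : R, 0 < e -> (H_send d u v < e%:E)%E) -> u x <= v x.
Proof.
move=> hu hv h.
have [v0 v1] := andP (usc_range x hv).
have [u0 u1] := andP (usc_range x hu).
case: (lerP (u x) 0) => ux0; first exact: le_trans ux0 v0.
suff hcl : forall a, 0 < a < u x -> a <= v x.
  apply/unstable.ler_ltP => a ha; case: (lerP a 0) => a0; first exact: le_trans a0 v0.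
  by apply: hcl; rewrite a0 ha.
move=> a /andP[a0 au]; apply: (usc_cut_closed hv); first by rewrite a0 (le_trans (ltW au) u1).
move=> e e0.
have m0 : 0 < Order.min e (u x - a) by rewrite lt_min e0 subr_gt0 au.
have /haus_lt [e' [ee' [h1 _]]] := h _ m0.
have sp : send d u (x, u x).
  by apply/sendP; split; [rewrite u0 u1| |apply: pos_cut0].
have [[y t] [/sendP [_ ty hy] hd]] := h1 _ sp.
exists y; split.
  apply: le_trans ty; have := le_lt_trans (dbar_t _ _) (lt_trans hd ee').
  rewrite lt_min => /andP[_] /=; have := ler_norm (u x - t); lra.
have := le_lt_trans (dbar_d _ _) (lt_trans hd ee').
by rewrite lt_min => /andP[].
Qed.


Lemma Hs_sep u v : F_USCB d u -> F_USCB d v ->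
  (forall e : R, 0 < e -> (H_send d u v < e%:E)%E) -> u = v.
Proof.
move=> hu hv h; apply: funext => x; apply/eqP; rewrite eq_le.
rewrite (Hs_le x hu.1 hv.1 h) /=.
apply: (Hs_le x hv.1 hu.1) => e e0; apply: Hs_sym => //; exact: h.
Qed.

Lemma compactU_iff (U : set (X -> R)) : m_compact (F_USCB d) (H_send d) U <->
  [/\ U `<=` F_USCB d, U !=set0 & seqc (H_send d) U].
Proof.
apply: (compact_iff (S := F_USCB d) (rho := H_send d)).
- exact: Hs_refl.
- exact: Hs_sym.
- move=> x y z a b Sx Sy Sz h1 h2; exact: Hs_tri Sx Sy Sz h1 h2.
Qed.

Lemma dist_cluster (x : nat -> X) z :
  (forall e : R, 0 < e -> forall N, exists n, (N <= n)%N /\ d z (x n) < e) ->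
  exists phi, incr phi /\ conv (dE d) z (x \o phi).
Proof.
move=> h; apply: cluster_subseq => e e0 N; have [n [Nn hn]] := h e e0 N.
by exists n; split => //; rewrite /dE lte_fin.
Qed.

Lemma conv_d (x : nat -> X) z : conv (dE d) z x ->
  forall e : R, 0 < e -> exists N, forall n, (N <= n)%N -> d z (x n) < e.
Proof. by move=> h e e0; have [N hN] := h e e0; exists N => n /hN; rewrite /dE lte_fin. Qed.


Lemma U0_seqc (U : set (X -> R)) (hU : U `<=` F_USCB d) : seqc (H_send d) U -> seqc (dE d) (U0 d U).
Proof.
move=> hK xs hxs.
have hu : forall n, exists u, U u /\ cut0 d u (xs n).
  by move=> n; have [u Uu hu] := hxs n; exists u.
case: (choice hu) => us hus.
have [u [phi [Uu hphi hc]]] := hK us (fun n => (hus n).1).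
have hn : forall k : nat, exists p : nat * X, [/\ (k <= p.1)%N, cut0 d u p.2 &
    d (xs (phi p.1)) p.2 < (k.+1%:R)^-1].
  move=> k; have [N hN] := hc _ (inv_pos R k).
  have hs := Hs_sym (hU _ Uu) (hU _ (hus (phi (maxn N k))).1) (hN _ (leq_maxl N k)).
  have [y [hy hd]] := Hs_cut0 (hU _ (hus (phi (maxn N k))).1).1 hs (hus _).2.
  by exists (maxn N k, y); split => //; exact: leq_maxr.
case: (choice hn) => ps hps.
have hcK : seqc (dE d) (cut0 d u) by have [_ /compactX_iff []] := hU _ Uu.
have [z [psi [hz hpsi hc2]]] := hcK (fun k => (ps k).2) (fun k => let: And3 _ h _ := hps k in h).
have [phi' [hphi' hc']] : exists phi', incr phi' /\ conv (dE d) z (xs \o phi').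
  apply: dist_cluster => e e0 M.
  have e20 : 0 < e / 2 by rewrite divr_gt0.
  have [k0 hk0] := inv_small e20.
  have [J hJ] := conv_d hc2 e20.
  pose j := maxn J (maxn k0 M).
  have jJ : (J <= j)%N by apply: leq_maxl.
  have jk : (k0 <= psi j)%N.
    apply: leq_trans (incr_ge hpsi j); apply: leq_trans (leq_maxr _ _); exact: leq_maxl.
  have jM : (M <= psi j)%N.
    apply: leq_trans (incr_ge hpsi j); apply: leq_trans (leq_maxr _ _); exact: leq_maxr.
  case: (hps (psi j)) => h1 _ h3.
  exists (phi (ps (psi j)).1); split.
    apply: leq_trans jM (leq_trans h1 (incr_ge hphi _)).
  apply: le_lt_trans (d_tri _ (ps (psi j)).2 _) _.
  rewrite [e]splitr; apply: ltrD; first exact: hJ.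
  rewrite d_sym; apply: lt_le_trans h3 _; apply: le_trans (ltW hk0).
  exact: inv_le.
exists z, phi'; split => //; exists u => //.
Qed.


Lemma exists_min (a b : R) : 0 < a -> 0 < b -> exists c, [/\ 0 < c, c <= a & c <= b].
Proof. by move=> a0 b0; case: (lerP a b) => h; [exists a|exists b]; split => //; lra. Qed.

Lemma inv_le1 (k : nat) : (k.+1%:R)^-1 <= 1 :> R.
Proof. by have := @inv_le R 0 k (leq0n k); rewrite invr1. Qed.

Lemma rc_single u : F_USCB d u -> forall e : R, 0 < e -> exists delta, 0 < delta <= 1 /\
  forall x, cut0 d u x -> exists y, delta <= u y /\ d x y < e.
Proof.
move=> hu e e0; apply: contrapT => hn.
have hx : forall k : nat, exists x, cut0 d u x /\ forall y, (k.+1%:R)^-1 <= u y -> e <= d x y.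
  move=> k; apply: contrapT => hk; apply: hn; exists (k.+1%:R)^-1; split.
    by rewrite inv_pos inv_le1.
  move=> x hx; apply: contrapT => hy; apply: hk; exists x; split => // y hy'.
  rewrite leNgt; apply/negP => hlt; apply: hy; by exists y.
case: (choice hx) => xs hxs.
have [_ /compactX_iff [_ hK]] := hu.
have [z [psi [hz hpsi hc]]] := hK xs (fun k => (hxs k).1).
have e20 : 0 < e / 2 by rewrite divr_gt0.
case: hz => _ /(_ (e / 2) e20) [y [/= hy hzy]].
have [k0 hk0] := inv_small hy.
have [N hN] := conv_d hc e20.
pose j := maxn N k0.
have hle : ((psi j).+1%:R)^-1 <= u y.
  apply: le_trans (ltW hk0); apply: inv_le; apply: leq_trans (incr_ge hpsi j).
  exact: leq_maxr.
have h1 := (hxs (psi j)).2 y hle.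
have h2 := d_tri (xs (psi j)) z y.
have h3 := hN j (leq_maxl _ _); rewrite /= in h3.
move: hzy; rewrite /dE lte_fin => hzy.
have h4 := d_sym (xs (psi j)) z; lra.
Qed.

Lemma erc_of_pt (U : set (X -> R)) : (forall e : R, 0 < e -> exists delta, 0 < delta /\
  forall u, U u -> forall x, cut0 d u x -> exists y, delta <= u y /\ d x y <= e) ->
  equi_right_cont0 d U.
Proof.
move=> h e e0; have e20 : 0 < e / 2 by rewrite divr_gt0.
have [delta [d0 hd]] := h _ e20; exists delta; split => // u Uu.
apply: (@haus_lt_of _ _ d _ _ (e / 2) e); first lra.
- move=> a ha; exists a; split; first exact: (cut_sub0 d0).
  by rewrite d_xx; lra.
- move=> b hb; have [y [hy hdy]] := hd u Uu b hb; exists y; split.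
    by rewrite cutE.
  by rewrite d_sym.
Qed.

Lemma erc_use (U : set (X -> R)) : equi_right_cont0 d U ->
  forall e : R, 0 < e -> exists delta, 0 < delta /\
  forall u, U u -> forall x, cut0 d u x -> exists y, delta <= u y /\ d x y < e.
Proof.
move=> h e e0; have [delta [d0 hd]] := h e e0; exists delta; split => // u Uu x hx.
have [e' [ee' [_ h2]]] := haus_lt (hd u Uu).
have [y [hy hdy]] := h2 x hx; exists y; split.
  by move: hy; rewrite cutE.
by rewrite d_sym; apply: lt_trans hdy ee'.
Qed.

Lemma erc_of_seqc (U : set (X -> R)) (hU : U `<=` F_USCB d) :
  seqc (H_send d) U -> equi_right_cont0 d U.
Proof.
move=> hK; apply: erc_of_pt => e e0; apply: contrapT => hn.
have hx : forall k : nat, exists p : (X -> R) * X, [/\ U p.1, cut0 d p.1 p.2 &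
    forall y, (k.+1%:R)^-1 <= p.1 y -> e < d p.2 y].
  move=> k; apply: contrapT => hk; apply: hn; exists (k.+1%:R)^-1; split.
    exact: inv_pos.
  move=> u Uu x hx; apply: contrapT => hy; apply: hk; exists (u, x); split => // y hy'.
  rewrite ltNge; apply/negP => hle; apply: hy; by exists y.
case: (choice hx) => ps hps.
have [u [phi [Uu hphi hc]]] := hK (fun k => (ps k).1) (fun k => let: And3 h _ _ := hps k in h).
have e30 : 0 < e / 3 by rewrite divr_gt0.
have [delta [/andP [dpos d1] hdel]] := rc_single (hU _ Uu) e30.
have d20 : 0 < delta / 2 by rewrite divr_gt0.
have [eta [eta0 eta1 eta2]] := exists_min e30 d20.
have [N hN] := hc _ eta0.
have [k0 hk0] := inv_small d20.
pose n := maxn N k0; pose m := phi n.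
have [Um hxm hfar] := hps m.
have hNn := hN n (leq_maxl _ _); rewrite /= -/m in hNn.
have hs := Hs_sym (hU _ Uu) (hU _ Um) hNn.
have [b [hb hxb]] := Hs_cut0 (hU _ Um).1 hs hxm.
have [y [hy hby]] := hdel b hb.
have spy : send d u (y, delta).
  apply/sendP; split; [by rewrite (ltW dpos) d1|by []|].
  by apply: pos_cut0; apply: lt_le_trans hy.
have [eta' [ee' [h1 _]]] := haus_lt hNn.
have [[w s] [/sendP [_ hsw hw] hd]] := h1 _ spy.
have t1 := le_lt_trans (dbar_t _ _) hd; rewrite /= in t1.
have t2 := le_lt_trans (dbar_d _ _) hd; rewrite /= in t2.
have i1 : (m.+1%:R)^-1 <= (k0.+1%:R)^-1 :> R.
  apply: inv_le; apply: leq_trans (incr_ge hphi n); exact: leq_maxr.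
have t3 := ler_norm (delta - s).
have hp : (m.+1%:R)^-1 <= (ps m).1 w.
  move: i1 hk0; set i := (m.+1%:R)^-1; set j := (k0.+1%:R)^-1; lra.
have t4 := d_tri (ps m).2 b w; have t5 := d_tri b y w.
have := hfar w hp; lra.
Qed.

Lemma closed_of_seqc (U : set (X -> R)) (hU : U `<=` F_USCB d) :
  seqc (H_send d) U -> m_closed (F_USCB d) (H_send d) U.
Proof.
move=> hK; apply: (seqc_closed (@Hs_sym) (@Hs_tri)) => //.
by move=> u v hu hv; apply: Hs_sep.
Qed.

Lemma relc_of_compact (A : set X) : m_compact setT (dE d) A ->
  m_rel_compact setT (dE d) A.
Proof.
move=> /compactX_iff [[x Ax] hA]; apply/compactX_iff; split.
  by exists x; apply: sub_clos.
have hcl : m_closed setT (dE d) A.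
  apply: (seqc_closed (@dE_sym) (@dE_tri)) => //.
  exact: dE_sep.
have := @seqc_sub _ _ setT (dE d) A (m_closure setT (dE d) A). move=> H; apply: H => //; exact: clos_closed.
Qed.

Lemma grid (t : R) (k : nat) : 0 <= t <= 1 ->
  exists j, (j < k.+2)%N /\ `|t - j%:R / k.+1%:R| < (k.+1%:R)^-1.
Proof.
move=> /andP[t0 t1].
have K0 : 0 < k.+1%:R :> R by rewrite ltr0Sn.
have x0 : 0 <= t * k.+1%:R by rewrite mulr_ge0 // ltW.
have /andP[h1 h2] := truncn_itv x0.
exists (Num.truncn (t * k.+1%:R)); split.
  rewrite ltnS truncn_le_nat; apply: le_lt_trans (_ : k.+1%:R < k.+2%:R); last by rewrite ltr_nat.
  by rewrite -[X in _ <= X]mul1r ler_pM2r.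
set j := Num.truncn _ in h1 h2 *.
have -> : t - j%:R / k.+1%:R = (t * k.+1%:R - j%:R) / k.+1%:R.
  by rewrite mulrBl mulfK // gt_eqF.
rewrite normrM ger0_norm ?subr_ge0 // ger0_norm ?invr_ge0 ?ltW //.
rewrite -[X in _ < X]mul1r ltr_pM2r ?invr_gt0 //; rewrite -natr1 in h2; lra.
Qed.

Section Limit.
Variable U : set (X -> R).
Hypothesis hU : U `<=` F_USCB d.
Hypothesis hUc : m_closed (F_USCB d) (H_send d) U.
Hypothesis herc : equi_right_cont0 d U.
Let K := m_closure setT (dE d) (U0 d U).
Hypothesis hKc : seqc (dE d) K.
Variable v : nat -> X -> R.
Hypothesis hv : forall n, U (v n).
Hypothesis hC : forall e : R, 0 < e -> exists N, forall a b, (N <= a)%N -> (N <= b)%N ->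
  forall p, send d (v a) p -> exists q, send d (v b) q /\ dbar d p q < e.

Lemma sendK n p : send d (v n) p -> K p.1.
Proof. by case: p => x t /sendP [_ _ hx]; apply: sub_clos; exists (v n). Qed.

Definition Alim := [set p : X * R | 0 <= p.2 <= 1 /\ forall e : R, 0 < e -> forall N,
  exists n, (N <= n)%N /\ exists q, send d (v n) q /\ dbar d p q < e].

Lemma A_closed p : 0 <= p.2 <= 1 ->
  (forall e : R, 0 < e -> exists p', Alim p' /\ dbar d p p' < e) -> Alim p.
Proof.
move=> p01 H; split => // e e0 N.
have e20 : 0 < e / 2 by rewrite divr_gt0.
have [p' [[_ hp'] h]] := H _ e20.
have [n [Nn [q [sq hq]]]] := hp' _ e20 N.
exists n; split => //; exists q; split => //.
have := dbar_tri p p' q; lra.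
Qed.

Lemma A_down x t s : Alim (x, t) -> 0 <= s <= t -> Alim (x, s).
Proof.
move=> [/andP[t0 t1] h] /andP[s0 st]; split.
  by rewrite /= s0 /=; apply: le_trans st t1.
move=> e e0 N; have [n [Nn [[y r] [/sendP [/andP[r0 r1] ry hy] hq]]]] := h e e0 N.
exists n; split => //.
case: (lerP r s) => hrs.
- exists (y, r); split; first by apply/sendP; split => //; rewrite r0 r1.
  move: hq; rewrite /dbar /= !ger0_norm ?subr_ge0 //; first lra.
  exact: le_trans hrs st.
- exists (y, s); split.
    apply/sendP; split => //; first by apply/andP; split; lra.
    exact: le_trans (ltW hrs) ry.
  rewrite /dbar /= subrr normr0 addr0; have := dbar_d (x, t) (y, r); rewrite /=; lra.
Qed.

Lemma A_K x t : Alim (x, t) -> K x.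
Proof.
move=> [_ h]; apply: clos_closed; split => // e e0.
have [n [_ [[y r] [hs hq]]]] := h e e0 0%N.
exists y; split; first exact: (sendK hs).
rewrite /dE lte_fin; have := dbar_d (x, t) (y, r); rewrite /=; lra.
Qed.

Lemma A_approx (e : R) : 0 < e -> exists N, forall n, (N <= n)%N ->
  (forall p, send d (v n) p -> exists q, Alim q /\ dbar d p q < e) /\
  (forall q, Alim q -> exists p, send d (v n) p /\ dbar d q p < e).
Proof.
move=> e0; have e30 : 0 < e / 3 by rewrite divr_gt0.
have [N hN] := hC e30; exists N => n Nn; split.
- move=> [x t] hp; have [/andP[t0 t1] tu hx] := (sendP _ _ _).1 hp.
  have hq : forall m, exists q, send d (v (m + N)) q /\ dbar d (x, t) q < e / 3.
    by move=> m; apply: (hN n (m + N)) => //; exact: leq_addl.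
  case: (choice hq) => qs hqs.
  have [y [phi [Ky hphi hc]]] := @hKc (fun m => (qs m).1) (fun m => sendK (hqs m).1).
  have [s [s0 st hs ts]] : exists s, [/\ 0 <= s, s <= t,
      (forall r, 0 <= r -> t - e / 3 < r -> s <= r) & t - s <= e / 3].
    case: (lerP t (e / 3)) => h.
      by exists 0; split; [by []|by []|by move=> r r0 _|lra].
    exists (t - e / 3); split; try lra.
    by move=> r _ hr; apply: ltW.
  have Ays : Alim (y, s).
    split; first by apply/andP; split => //=; lra.
    move=> e' e0' N'; have [J hJ] := conv_d hc e0'.
    pose j := maxn J N'.
    exists (phi j + N)%N; split.
      apply: leq_trans (leq_addr _ _); apply: leq_trans (incr_ge hphi j).
      exact: leq_maxr.
    have hJj := hJ j (leq_maxl _ _); rewrite /= in hJj.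
    move: hJj; case: (qs (phi j)) (hqs (phi j)) => z r /= [/sendP [/andP[r0 r1] rz hz] hd] hJj.
    exists (z, s); split.
      apply/sendP; split => //; first by apply/andP; split; lra.
      apply: le_trans rz; apply: hs => //.
      have := dbar_t (x, t) (z, r); rewrite /=; have := ler_norm (t - r); lra.
    by rewrite /dbar /= subrr normr0 addr0.
  exists (y, s); split => //.
  have [J hJ] := conv_d hc e30.
  have hJj := hJ J (leqnn _); rewrite /= in hJj.
  move: hJj; case: (qs (phi J)) (hqs (phi J)) => z r /= [_ hd] hJj.
  have h1 := dbar_d (x, t) (z, r); rewrite /= in h1.
  have h2 := d_tri x z y; have h3 := d_sym z y.
  rewrite /dbar /= ger0_norm ?subr_ge0 //; lra.
- move=> q [q01 hq]; have [n' [Nn' [p' [sp' hp']]]] := hq _ e30 N.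
  have [p [sp hpp]] := hN n' n Nn' Nn p' sp'.
  exists p; split => //; have := dbar_tri q p' p; lra.
Qed.

Lemma A_one : exists x, Alim (x, 1).
Proof.
have hz : forall n, exists z, 1 <= v n z by move=> n; apply: usc_one; exact: (hU (hv n)).1.
case: (choice hz) => zs hzs.
have Kz : forall n, K (zs n).
  move=> n; apply: sub_clos; exists (v n) => //; apply: pos_cut0.
  exact: lt_le_trans ltr01 (hzs n).
have [z [phi [_ hphi hc]]] := @hKc zs Kz.
exists z; split; first by rewrite /= ler01 lexx.
move=> e e0 N; have [J hJ] := conv_d hc e0; pose j := maxn J N.
exists (phi j); split; first by apply: leq_trans (incr_ge hphi j); exact: leq_maxr.
exists (zs (phi j), 1); split.
  apply/sendP; split => //; first by rewrite ler01 lexx.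
  apply: pos_cut0; exact: lt_le_trans ltr01 (hzs _).
rewrite /dbar /= subrr normr0 addr0; exact: (hJ j (leq_maxl _ _)).
Qed.

Lemma A_erc x : Alim (x, 0) -> forall e : R, 0 < e ->
  exists w s, [/\ Alim (w, s), 0 < s & d x w < e].
Proof.
move=> hx e e0; have e30 : 0 < e / 3 by rewrite divr_gt0.
have [delta [d0 hdel]] := erc_use herc e30.
have d20 : 0 < delta / 2 by rewrite divr_gt0.
have [eta [eta0 eta1 eta2]] := exists_min e30 d20.
have [N hN] := A_approx eta0.
have [n [Nn [[y r] [/sendP [_ _ hy] hd]]]] := hx.2 _ eta0 N.
have [z [hz hyz]] := hdel (v n) (hv n) y hy.
have sz : send d (v n) (z, delta).
  have [_ z1] := andP (usc_range z (hU (hv n)).1).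
  apply/sendP; split => //; first by apply/andP; split; [exact: ltW|exact: le_trans hz z1].
  apply: pos_cut0; exact: lt_le_trans hz.
have [[w s] [Aw hdw]] := (hN n Nn).1 _ sz.
exists w, s; split => //.
  have := dbar_t (z, delta) (w, s); rewrite /=; have := ler_norm (delta - s); lra.
have h1 := dbar_d (x, 0) (y, r); have h2 := dbar_d (z, delta) (w, s).
rewrite /= in h1 h2.
have h3 := d_tri x y w; have h4 := d_tri y z w; lra.
Qed.

Definition ulim (x : X) : R := sup [set t | Alim (x, t)].

Lemma u_ub x t : Alim (x, t) -> t <= ulim x.
Proof.
move=> h; apply: sup_upper_bound => //; split; first by exists t.
by exists 1 => t' [/andP[_ ?] _].
Qed.

Lemma u_empty x : ~ (exists t, Alim (x, t)) -> ulim x = 0.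
Proof.
move=> hn; rewrite /ulim.
have -> : [set t | Alim (x, t)] = set0.
  by apply/seteqP; split => t // h; apply: hn; exists t.
exact: sup0.
Qed.

Lemma u_range x : 0 <= ulim x <= 1.
Proof.
case: (pselect (exists t, Alim (x, t))) => [[t ht]|hn]; last by rewrite u_empty // lexx ler01.
apply/andP; split.
  by apply: le_trans (u_ub ht); case: ht => /andP[].
by apply: ge_sup; [exists t|move=> t' [/andP[_ ?] _]].
Qed.

Lemma u_att x t : Alim (x, t) -> Alim (x, ulim x).
Proof.
move=> ht; apply: A_closed; first exact: u_range.
move=> e e0.
have hs : has_sup [set t | Alim (x, t)].
  by split; [exists t|exists 1 => t' [/andP[_ ?] _]].
have [t' ht' lt'] := sup_adherent e0 hs.
exists (x, t'); split => //.
have hu := u_ub ht'; rewrite /dbar /= d_xx add0r ger0_norm ?subr_ge0 //; rewrite -/(ulim x) in lt'; lra.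
Qed.

Lemma u_cut x a : 0 < a -> (a <= ulim x <-> Alim (x, a)).
Proof.
move=> a0; split; last exact: u_ub.
move=> ha; case: (pselect (exists t, Alim (x, t))) => [[t ht]|hn].
  by apply: A_down (u_att ht) _; rewrite (ltW a0).
by move: ha; rewrite u_empty // => ha; have := lt_le_trans a0 ha; rewrite ltxx.
Qed.

Lemma u_cut0 x : cut0 d ulim x <-> Alim (x, 0).
Proof.
split.
- move=> [_ h]; apply: A_closed; first by rewrite /= lexx ler01.
  move=> e e0; have [y [/= hy hxy]] := h e e0.
  case: (pselect (exists t, Alim (y, t))) => [[t ht]|hn]; last first.
    by move: hy; rewrite u_empty // ltxx.
  exists (y, 0); split; first by apply: A_down (u_att ht) _; rewrite lexx; case/andP: (u_range y).
  by rewrite /dbar /= subrr normr0 addr0; move: hxy; rewrite /dE lte_fin.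
- move=> hx; split => // e e0; have [w [s [Aw s0 hw]]] := A_erc hx e0.
  exists w; split; first exact: lt_le_trans s0 (u_ub Aw).
  by rewrite /dE lte_fin.
Qed.

Lemma send_u : send d ulim = Alim.
Proof.
apply/seteqP; split => -[x t].
- move=> /sendP [t01 tu hx]; have A0 := (u_cut0 x).1 hx.
  apply: A_down (u_att A0) _; case/andP: t01 => t0 _; by rewrite t0.
- move=> ht; have [t01 _] := ht; apply/sendP; split => //; first exact: u_ub.
  apply/u_cut0; apply: A_down ht _; rewrite lexx; by case/andP: t01.
Qed.

Lemma u_F : F_USCB d ulim.
Proof.
have [x1 h1] := A_one.
have c0 : cut0 d ulim x1.
  by apply/u_cut0; apply: A_down h1 _; rewrite lexx ler01.
split; [split|].
- exact: u_range.
- move=> a /andP[a0 a1]; case: (ltrP 0 a) => ha.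
  + rewrite cutE //; split.
      by exists x1; apply/u_cut => //; apply: A_down h1 _; rewrite (ltW ha) a1.
    move=> x [_ hx] /=; apply/u_cut => //; apply: A_closed; first by rewrite /= (ltW ha) a1.
    move=> e e0; have [y [/= hy hxy]] := hx e e0.
    exists (y, a); split; first by apply/u_cut.
    by rewrite /dbar /= subrr normr0 addr0; move: hxy; rewrite /dE lte_fin.
  + have -> : a = 0 by apply/eqP; rewrite eq_le ha a0.
    rewrite cut0E; split; first by exists x1.
    exact: cut0_closed.
- apply/compactX_iff; split; first by exists x1.
  have := @seqc_sub _ _ setT (dE d) K (cut0 d ulim).
  move=> H; apply: H => //; first exact: cut0_closed.
  by move=> x /u_cut0; apply: A_K.
Qed.

Lemma conv_u : conv (H_send d) ulim v.
Proof.
move=> e e0; have e20 : 0 < e / 2 by rewrite divr_gt0.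
have [N hN] := A_approx e20; exists N => n Nn.
rewrite /H_send send_u; apply: (@haus_lt_of _ _ (dbar d) _ _ (e / 2) e); first lra.
- move=> a Aa; have [b [sb hb]] := (hN n Nn).2 a Aa.
  by exists b; split => //; apply: ltW.
- move=> b sb; have [a [Aa ha]] := (hN n Nn).1 b sb.
  by exists a; split => //; rewrite dbar_sym; apply: ltW.
Qed.

Lemma u_in_U : U ulim.
Proof.
apply: hUc; split; first exact: u_F.
move=> e e0; have [N hN] := conv_u e0.
by exists (v N); split; [exact: hv|exact: hN].
Qed.

End Limit.



Lemma net_of_compact (K : set X) : m_compact setT (dE d) K -> forall e : R, 0 < e ->
  exists m (c : nat -> X), forall x, K x -> exists i, (i < m)%N /\ d (c i) x < e.
Proof.
move=> [_ hK] e e0.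
have Gop : forall y : X, m_open setT (dE d) [set z | (dE d y z < e%:E)%E].
  by move=> y; apply: (ball_open (@dE_tri)).
have cov : K `<=` \bigcup_(y : X) [set z | (dE d y z < e%:E)%E].
  by move=> x Kx; exists x => //=; apply: dE_refl.
have [m [f hf]] := hK X _ Gop cov.
exists m, f => x Kx; have [k [km hk]] := hf x Kx.
by exists k; split => //; move: hk; rewrite /= /dE lte_fin.
Qed.

Lemma level (U : set (X -> R)) (hKm : m_rel_compact setT (dE d) (U0 d U))
  (w : nat -> X -> R) (hw : forall n, U (w n)) (e : R) (e0 : 0 < e) (J : nat -> Prop) :
  infn J -> exists J', [/\ infn J', (forall n, J' n -> J n) &
    forall a b, J' a -> J' b -> forall p, send d (w a) p ->
      exists q, send d (w b) q /\ dbar d p q < 4 * e].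
Proof.
move=> hJ.
have [m [c hc]] := net_of_compact hKm e0.
have [k hk] := inv_small e0.
pose P (ij : 'I_m * 'I_k.+2) : X * R := (c ij.1, (ij.2 : nat)%:R / k.+1%:R).
pose pat n : {ffun 'I_m * 'I_k.+2 -> bool} :=
  [ffun ij => `[< exists q, send d (w n) q /\ dbar d (P ij) q < 2 * e >]].
have [c0 hc0] := pigeon pat hJ.
exists (fun n => J n /\ pat n = c0); split => //; first by move=> n [].
move=> a b [_ ha] [_ hb] [x t] hp.
have [t01 _ hx] := (sendP _ _ _).1 hp.
have Kx : m_closure setT (dE d) (U0 d U) x by apply: sub_clos; exists (w a).
have [i [im hi]] := hc x Kx.
have [j [jk hj]] := grid k t01.
pose ij := (Ordinal im, Ordinal jk).
have hdp : dbar d (x, t) (P ij) < 2 * e.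
  rewrite /dbar /= d_sym; have := lt_trans hj hk; lra.
have pa : pat a ij.
  by rewrite /pat ffunE; apply/asboolP; exists (x, t); split => //; rewrite dbar_sym.
have : pat b ij by rewrite hb -ha.
rewrite /pat ffunE => /asboolP [q [sq hq]].
by exists q; split => //; have := dbar_tri (x, t) (P ij) q; lra.
Qed.

Lemma hard (U : set (X -> R)) (hU : U `<=` F_USCB d)
  (hUc : m_closed (F_USCB d) (H_send d) U)
  (hKm : m_rel_compact setT (dE d) (U0 d U)) (herc : equi_right_cont0 d U) :
  m_compact (F_USCB d) (H_send d) U.
Proof.
have [[x0 hx0] hKc] := (compactX_iff _).1 hKm.
apply/compactU_iff; split => //.
  by case: hx0 => _ /(_ 1 ltr01) [y [[u Uu _] _]]; exists u.
move=> w hw.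
have [psi [hpsi hcl]] := diag (close := fun k a b => forall p, send d (w a) p ->
    exists q, send d (w b) q /\ dbar d p q < 4 * (k.+1%:R)^-1)
  (fun k J hJ => level hKm hw (inv_pos R k) hJ).
pose v := w \o psi.
have hv : forall n, U (v n) by move=> n; apply: hw.
have hC : forall e : R, 0 < e -> exists N, forall a b, (N <= a)%N -> (N <= b)%N ->
    forall p, send d (v a) p -> exists q, send d (v b) q /\ dbar d p q < e.
  move=> e e0; have e40 : 0 < e / 4 by rewrite divr_gt0.
  have [k hk] := inv_small e40.
  exists k => a b ka kb p hp; have [q [sq hq]] := hcl k a b ka kb p hp.
  exists q; split => //; move: hq hk; set iv := (k.+1%:R)^-1; lra.
exists (ulim v), psi; split => //.
  exact: (u_in_U hU hUc herc hKc hv hC).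
exact: (conv_u hU herc hKc hv hC).
Qed.

Lemma main (U : set (X -> R)) (hU : U `<=` F_USCB d) :
  (m_compact (F_USCB d) (H_send d) U <->
     [/\ m_closed (F_USCB d) (H_send d) U,
         m_rel_compact setT (dE d) (U0 d U)
       & equi_right_cont0 d U]) /\
  ([/\ m_closed (F_USCB d) (H_send d) U,
       m_rel_compact setT (dE d) (U0 d U)
     & equi_right_cont0 d U] <->
   [/\ m_closed (F_USCB d) (H_send d) U,
       m_compact setT (dE d) (U0 d U)
     & equi_right_cont0 d U]).
Proof.
have i_iii : m_compact (F_USCB d) (H_send d) U ->
    [/\ m_closed (F_USCB d) (H_send d) U, m_compact setT (dE d) (U0 d U)
      & equi_right_cont0 d U].
  move=> /compactU_iff [_ [u Uu] hK]; split.
  - exact: closed_of_seqc.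
  - apply/compactX_iff; split; last exact: U0_seqc.
    have [x hx] := cut0_nonempty (hU _ Uu).1; by exists x; exists u.
  - exact: erc_of_seqc.
have ii_i : [/\ m_closed (F_USCB d) (H_send d) U, m_rel_compact setT (dE d) (U0 d U)
      & equi_right_cont0 d U] -> m_compact (F_USCB d) (H_send d) U.
  by case=> h1 h2 h3; apply: hard.
have iii_ii : [/\ m_closed (F_USCB d) (H_send d) U, m_compact setT (dE d) (U0 d U)
      & equi_right_cont0 d U] -> [/\ m_closed (F_USCB d) (H_send d) U,
      m_rel_compact setT (dE d) (U0 d U) & equi_right_cont0 d U].
  by case=> h1 h2 h3; split => //; apply: relc_of_compact.
split; split.
- by move/i_iii; exact: iii_ii.
- exact: ii_i.
- by move/ii_i; exact: i_iii.
- exact: iii_ii.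
Qed.

End Fuzzy.

Unset Implicit Arguments.

Theorem theorem5p16 (R : realType) (X : Type) (d : X -> X -> R)
  (d_ge0 : forall x y, 0 <= d x y)
  (d_eq0 : forall x y, d x y = 0 <-> x = y)
  (d_sym : forall x y, d x y = d y x)
  (d_tri : forall x y z, d x z <= d x y + d y z)
  (U : set (X -> R)) (hU : U `<=` F_USCB d) :
  (m_compact (F_USCB d) (H_send d) U <->
     [/\ m_closed (F_USCB d) (H_send d) U,
         m_rel_compact setT (dE d) (U0 d U)
       & equi_right_cont0 d U]) /\
  ([/\ m_closed (F_USCB d) (H_send d) U,
       m_rel_compact setT (dE d) (U0 d U)
     & equi_right_cont0 d U] <->
   [/\ m_closed (F_USCB d) (H_send d) U,
       m_compact setT (dE d) (U0 d U)
     & equi_right_cont0 d U]).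
Proof. by apply: main. Qed.
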